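(* Let $G$ be a two-player objective game ($n=2$) and let $(a^*_1,a^*_2)\in A_1\times A_2$ be Pareto efficient with respect to $\pi$. If $(a^*_1,a^*_2)$ is a strict Nash equilibrium of $G$, then $(a^*_1,a^*_2)$ is stable under perfect observability, i.e. there is $\mu\in\mathcal M(\Theta^2)$ and a stable configuration $(\mu,b)$ whose aggregate outcome is the point mass at $(a^*_1,a^*_2)$.
   Context: Objective game: $G=(N,A,\pi)$ is a finite $n$-player normal-form game, $N=\{1,\dots,n\}$, finite action sets $A_i$, $A=\prod_{i\in N}A_i$, material payoff (fitness) functions $\pi_i:A\to\mathbb{R}$, extended multilinearly to mixed profiles in $\prod_{i}\Delta(A_i)$; $\pi=(\pi_1,\dots,\pi_n)$. Preference types: $\Theta=\mathbb{R}^A$ (utility functions on $A$, extended multilinearly to mixed profiles). $\mathcal{M}(\Theta^n)$ is the set of product distributions $\mu=\mu_1\times\dots\times\mu_n$ on $\Theta^n$ with each $\mu_i$ finitely supported; $\operatorname{supp}\mu=\prod_i\operatorname{supp}\mu_i$, $\mu(\theta)=\prod_i\mu_i(\theta_i)$, $\mu_{-i}(\theta_{-i})=\prod_{j\neq i}\mu_j(\theta_j)$. Mutants: for nonempty $J\subseteq N$, a mutant sub-profile is $\tilde\theta_J\in\prod_{j\in J}(\Theta\setminus\operatorname{supp}\mu_j)$ with shares $\varepsilon=(\varepsilon_j)_{j\in J}\in(0,1)^{|J|}$, $\|\varepsilon\|=\max_j\varepsilon_j$; the post-entry distribution $\tilde\mu^\varepsilon$ has $\tilde\mu^\varepsilon_i=(1-\varepsilon_i)\mu_i+\varepsilon_i\delta_{\tilde\theta_i}$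 for $i\in J$ and $\tilde\mu^\varepsilon_i=\mu_i$ otherwise. Perfect observability: for $\mu\in\mathcal M(\Theta^n)$, an equilibrium is a map $b:\operatorname{supp}\mu\to\prod_i\Delta(A_i)$ such that for each $\theta$, $b(\theta)$ is a Nash equilibrium of the normal-form game with action sets $A_i$ and payoffs $\theta_1,\dots,\theta_n$; $B_1(\mu)$ is the set of these; $(\mu,b)$ with $b\in B_1(\mu)$ is a configuration, with aggregate outcome $\varphi_{\mu,b}(a)=\sum_{\theta\in\operatorname{supp}\mu}\mu(\theta)\prod_{i}b_i(\theta)(a_i)$. Average fitness of $\theta_i\in\operatorname{supp}\mu_i$: $\Pi_{\theta_i}(\mu;b)=\sum_{\theta'_{-i}\in\operatorname{supp}\mu_{-i}}\mu_{-i}(\theta'_{-i})\pi_i(b(\theta_i,\theta'_{-i}))$. $(\mu,b)$ is balanced if for each $i$ all types in $\operatorname{supp}\mu_i$ have equal average fitness. Focal set: $B_1(\tilde\mu^\varepsilon;b)=\{\tilde b\in B_1(\tilde\mu^\varepsilon):\tilde b(\theta)=b(\theta)\ \forall\theta\in\operatorname{supp}\mu\}$. $(\mu,b)$ is stable if it is balanced and for every nonempty $J\subseteq N$ and every mutant sub-profile $\tilde\theta_J$ there is $\bar\epsilon\in(0,1)$ such that for every $\varepsilon\in(0,1)^{|J|}$ with $\|\varepsilon\|<\bar\epsilon$ and every $\tilde b\in B_1(\tilde\mu^\varepsilon;b)$, either (i) there is $j\in J$ with $\Pi_{\theta_j}(\tilde\mu^\varepsilon;\tilde b)>\Pi_{\tilde\theta_j}(\tilde\mu^\varepsilon;\tilde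 b)$ for all $\theta_j\in\operatorname{supp}\mu_j$, or (ii) for every $i\in N$ all types in $\operatorname{supp}\tilde\mu^\varepsilon_i$ have equal average fitness under $(\tilde\mu^\varepsilon,\tilde b)$. A profile $\sigma\in\prod_i\Delta(A_i)$ is stable if the product distribution $\varphi_\sigma(a)=\prod_i\sigma_i(a_i)$ is the aggregate outcome of some stable configuration. Pareto notions: $\sigma$ Pareto dominates $\sigma'$ if $\pi_i(\sigma)\ge\pi_i(\sigma')$ for all $i$ with strict inequality for some $i$; $\sigma$ is Pareto efficient if no profile in $\prod_i\Delta(A_i)$ Pareto dominates it. A strict Nash equilibrium $a^*$ satisfies $\pi_i(a^* )>\pi_i(a_i,a^*_{-i})$ for all $i$ and all $a_i\neq a^*_i$. *)

(* Defs.v *)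
(* Reals are modelled by an arbitrary realFieldType R
   (the statement is purely order-algebraic; R = ℝ is an instance). *)
From HB Require Import structures.
From mathcomp Require Import all_boot all_order all_algebra.
Set Implicit Arguments. Unset Strict Implicit. Unset Printing Implicit Defensive.
Import Order.TTheory GRing.Theory Num.Theory.
Local Open Scope ring_scope.

Section Game.
Variables (R : realFieldType) (A1 A2 : finType).

Definition is_mixed (A : finType) (s : {ffun A -> R}) : Prop :=
  (forall a, 0 <= s a) /\ \sum_(a : A) s a = 1.

Definition dirac (A : finType) (a0 : A) : {ffun A -> R} :=
  [ffun a => if a == a0 then 1 else 0].

Definition ext (u : A1 * A2 -> R) (s1 : {ffun A1 -> R}) (s2 : {ffun A2 -> R}) : R :=
  \sum_(x1 : A1) \sum_(x2 : A2) s1 x1 * s2 x2 * u (x1, x2).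

Definition Theta := {ffun A1 * A2 -> R}.

Definition profile := ({ffun A1 -> R} * {ffun A2 -> R})%type.

Definition nash (th1 th2 : A1 * A2 -> R) (s : profile) : Prop :=
  is_mixed s.1 /\ is_mixed s.2 /\
  (forall t1, is_mixed t1 -> ext th1 t1 s.2 <= ext th1 s.1 s.2) /\
  (forall t2, is_mixed t2 -> ext th2 s.1 t2 <= ext th2 s.1 s.2).

Record dist := Dist { dsupp : seq Theta; dwt : Theta -> R }.

Definition valid_dist (d : dist) : Prop :=
  uniq (dsupp d) /\ (forall t, t \in dsupp d -> 0 < dwt d t) /\
  \sum_(t <- dsupp d) dwt d t = 1.

(* post-entry distribution (1-e) d + e δ_m (m ∉ supp d) *)
Definition entry (m : Theta) (e : R) (d : dist) : dist :=
  Dist (m :: dsupp d) (fun t => if t == m then e else (1 - e) * dwt d t).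

Definition entry_opt (m : option Theta) (e : R) (d : dist) : dist :=
  match m with None => d | Some t => entry t e d end.

(* strategy map b : supp μ -> profiles (values off the support are irrelevant) *)
Definition strat := Theta -> Theta -> profile.

Definition is_equilibrium (d1 d2 : dist) (b : strat) : Prop :=
  forall t1 t2, t1 \in dsupp d1 -> t2 \in dsupp d2 -> nash t1 t2 (b t1 t2).

Definition aggregate (d1 d2 : dist) (b : strat) (a : A1 * A2) : R :=
  \sum_(t1 <- dsupp d1) \sum_(t2 <- dsupp d2)
     dwt d1 t1 * dwt d2 t2 * (b t1 t2).1 a.1 * (b t1 t2).2 a.2.

Variables (pi1 pi2 : A1 * A2 -> R).

Definition fit1 (d1 d2 : dist) (b : strat) (t1 : Theta) : R :=
  \sum_(t2 <- dsupp d2) dwt d2 t2 * ext pi1 (b t1 t2).1 (b t1 t2).2.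
Definition fit2 (d1 d2 : dist) (b : strat) (t2 : Theta) : R :=
  \sum_(t1 <- dsupp d1) dwt d1 t1 * ext pi2 (b t1 t2).1 (b t1 t2).2.

Definition balanced (d1 d2 : dist) (b : strat) : Prop :=
  (forall t t', t \in dsupp d1 -> t' \in dsupp d1 -> fit1 d1 d2 b t = fit1 d1 d2 b t') /\
  (forall t t', t \in dsupp d2 -> t' \in dsupp d2 -> fit2 d1 d2 b t = fit2 d1 d2 b t').

Definition focal (d1 d2 : dist) (b : strat) (e1 e2 : dist) (bt : strat) : Prop :=
  is_equilibrium e1 e2 bt /\
  (forall t1 t2, t1 \in dsupp d1 -> t2 \in dsupp d2 -> bt t1 t2 = b t1 t2).

(* The mutant set J ⊆ {1,2} is encoded by m1, m2 : option Theta
   (Some t = player i ∈ J with mutant type t), not both None. *)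
Definition stable (d1 d2 : dist) (b : strat) : Prop :=
  balanced d1 d2 b /\
  forall m1 m2 : option Theta,
    (m1 <> None \/ m2 <> None) ->
    (forall t, m1 = Some t -> t \notin dsupp d1) ->
    (forall t, m2 = Some t -> t \notin dsupp d2) ->
    exists eb : R, 0 < eb < 1 /\
      forall e1 e2 : R,
        (m1 <> None -> 0 < e1 < eb) -> (m2 <> None -> 0 < e2 < eb) ->
        let f1 := entry_opt m1 e1 d1 in
        let f2 := entry_opt m2 e2 d2 in
        forall bt : strat, focal d1 d2 b f1 f2 bt ->
          ((exists t, m1 = Some t /\
              forall t1, t1 \in dsupp d1 -> fit1 f1 f2 bt t < fit1 f1 f2 bt t1) \/
           (exists t, m2 = Some t /\
              forall t2, t2 \in dsupp d2 -> fit2 f1 f2 bt t < fit2 f1 f2 bt t2))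
          \/ balanced f1 f2 bt.

Definition stable_profile (s : profile) : Prop :=
  exists (d1 d2 : dist) (b : strat),
    valid_dist d1 /\ valid_dist d2 /\ is_equilibrium d1 d2 b /\
    stable d1 d2 b /\
    forall a : A1 * A2, aggregate d1 d2 b a = s.1 a.1 * s.2 a.2.

Definition pareto_dominates (s s' : profile) : Prop :=
  ext pi1 s.1 s.2 >= ext pi1 s'.1 s'.2 /\ ext pi2 s.1 s.2 >= ext pi2 s'.1 s'.2 /\
  (ext pi1 s.1 s.2 > ext pi1 s'.1 s'.2 \/ ext pi2 s.1 s.2 > ext pi2 s'.1 s'.2).

Definition pareto_efficient (s : profile) : Prop :=
  ~ exists s' : profile, is_mixed s'.1 /\ is_mixed s'.2 /\ pareto_dominates s' s.

Definition strict_nash (a : A1 * A2) : Prop :=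
  (forall x1, x1 != a.1 -> pi1 (x1, a.2) < pi1 a) /\
  (forall x2, x2 != a.2 -> pi2 (a.1, x2) < pi2 a).

End Game.

(* Main.v *)
Require Import Defs.
From HB Require Import structures.
From mathcomp Require Import all_boot all_order all_algebra.
From mathcomp Require Import ring lra.
Import Order.TTheory GRing.Theory Num.Theory.
Local Open Scope ring_scope.
Set Implicit Arguments. Unset Strict Implicit. Unset Printing Implicit Defensive.

Section Aux.
Variables (R : realFieldType) (A1 A2 : finType).

Lemma sum_dirac (A : finType) (a : A) (f : A -> R) :
  \sum_x dirac R a x * f x = f a.
Proof.
rewrite (bigD1 a) //= ffunE eqxx mul1r big1 ?addr0 // => x /negbTE Hx.
by rewrite ffunE Hx mul0r.
Qed.

Lemma ext_dirac1 (u : A1 * A2 -> R) a1 s2 :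
  ext u (dirac R a1) s2 = \sum_x2 s2 x2 * u (a1, x2).
Proof.
rewrite /ext (bigD1 a1) //= [X in _ + X]big1 ?addr0.
  by apply: eq_bigr => x2 _; rewrite ffunE eqxx mul1r.
move=> x1 /negbTE Hx; apply: big1 => x2 _; by rewrite ffunE Hx !mul0r.
Qed.

Lemma ext_dirac2 (u : A1 * A2 -> R) s1 a2 :
  ext u s1 (dirac R a2) = \sum_x1 s1 x1 * u (x1, a2).
Proof.
rewrite /ext; apply: eq_bigr => x1 _.
rewrite (bigD1 a2) //= big1 ?addr0.
  by rewrite ffunE eqxx mulr1.
move=> x2 /negbTE Hx; by rewrite ffunE Hx mulr0 mul0r.
Qed.

Lemma ext_scale (u : A1 * A2 -> R) c1 c2 (s1 : {ffun A1 -> R}) (s2 : {ffun A2 -> R}) :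
  ext u [ffun x => c1 * s1 x] [ffun x => c2 * s2 x] = c1 * c2 * ext u s1 s2.
Proof.
rewrite /ext mulr_sumr; apply: eq_bigr => x1 _; rewrite mulr_sumr.
apply: eq_bigr => x2 _; rewrite !ffunE; ring.
Qed.

Lemma ext_subc (u : A1 * A2 -> R) c s1 s2 :
  ext (fun x => u x - c) s1 s2 = ext u s1 s2 - c * (\sum_x s1 x) * (\sum_x s2 x).
Proof.
have -> : c * (\sum_x s1 x) * (\sum_x s2 x) = \sum_x1 \sum_x2 s1 x1 * s2 x2 * c.
  rewrite (mulrC c) -mulrA big_distrl /=; apply: eq_bigr => x1 _.
  rewrite mulr_sumr big_distrr /=; apply: eq_bigr => x2 _; ring.
rewrite /ext -sumrB; apply: eq_bigr => x1 _; rewrite -sumrB.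
by apply: eq_bigr => x2 _; ring.
Qed.

Lemma ext_lin1 (u : A1 * A2 -> R) s1 s2 :
  ext u s1 s2 = \sum_x1 s1 x1 * ext u (dirac R x1) s2.
Proof.
rewrite {1}/ext; apply: eq_bigr => x1 _; rewrite ext_dirac1 mulr_sumr.
by apply: eq_bigr => x2 _; ring.
Qed.

End Aux.

Section Cone.
Variable R : realFieldType.

Lemma cone2 (I : finType) (v1 v2 : I -> R) (K : R) (w : I -> R) :
  0 <= K ->
  (forall mu : I -> R, (forall i, 0 <= mu i) ->
     0 <= \sum_i mu i * v2 i -> \sum_i mu i * v1 i <= 0) ->
  (forall i, 0 <= v2 i -> K * v1 i + v2 i <= 0) ->
  (forall i, 0 <= w i) -> 0 <= \sum_i w i * v2 i ->
  K * (\sum_i w i * v1 i) + \sum_i w i * v2 i <= 0.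
Proof.
move=> K0 E Hv w0 p2ge.
pose q1 := \sum_(i | 0 < v2 i) w i * v1 i.
pose q2 := \sum_(i | 0 < v2 i) w i * v2 i.
pose r1 := \sum_(i | ~~ (0 < v2 i)) w i * v1 i.
pose r2 := \sum_(i | ~~ (0 < v2 i)) w i * v2 i.
have Hp1 : \sum_i w i * v1 i = q1 + r1 by rewrite (bigID (fun i => 0 < v2 i)).
have Hp2 : \sum_i w i * v2 i = q2 + r2 by rewrite (bigID (fun i => 0 < v2 i)).
have Hq : K * q1 + q2 <= 0.
  rewrite /q1 /q2 mulr_sumr -big_split /=; apply: sumr_le0 => i Hi.
  have -> : K * (w i * v1 i) + w i * v2 i = w i * (K * v1 i + v2 i) by ring.
  by apply: mulr_ge0_le0 => //; apply: Hv; apply: ltW.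
have Hq2 : 0 <= q2.
  by apply: sumr_ge0 => i Hi; apply: mulr_ge0 => //; apply: ltW.
have Hr2 : r2 <= 0.
  apply: sumr_le0 => i Hi; apply: mulr_ge0_le0 => //.
  by rewrite leNgt.
rewrite Hp1 Hp2 in p2ge *.
rewrite leNgt; apply/negP => Hc.
have [q20|q2pos] := eqVneq q2 0.
  have := E w w0; rewrite Hp1 Hp2 => /(_ p2ge) Hp1le.
  have : K * (q1 + r1) <= 0 by apply: mulr_ge0_le0.
  rewrite q20 in Hc p2ge; lra.
have q2gt : 0 < q2 by rewrite lt_def q2pos Hq2.
pose mu := fun i => if 0 < v2 i then - r2 * w i else q2 * w i.
have mu0 : forall i, 0 <= mu i.
  move=> i; rewrite /mu; case: ifP => _.
    by apply: mulr_ge0 => //; rewrite oppr_ge0.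
  by apply: mulr_ge0 => //; apply: ltW.
have Hmu : forall v : I -> R,
    \sum_i mu i * v i = - r2 * (\sum_(i | 0 < v2 i) w i * v i)
                        + q2 * (\sum_(i | ~~ (0 < v2 i)) w i * v i).
  move=> v; rewrite (bigID (fun i => 0 < v2 i)) /= !mulr_sumr.
  congr (_ + _); apply: eq_bigr => i Hi; rewrite /mu.
    by rewrite Hi mulrA.
  by rewrite (negbTE Hi) mulrA.
have := E mu mu0; rewrite !Hmu -/q1 -/q2 -/r1 -/r2.
have -> : - r2 * q2 + q2 * r2 = 0 by ring.
move=> /(_ (lexx 0)) Hle.
have Hprod : 0 <= (q2 + r2) * - (K * q1 + q2).
  by apply: mulr_ge0 => //; rewrite oppr_ge0.
have HK : K * (- r2 * q1 + q2 * r1) <= 0 by apply: mulr_ge0_le0.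
nra.
Qed.

End Cone.

Section Core.
Variable R : realFieldType.

Lemma core (K e1 e2 g1 g2 P1 P2 D1 D2 : R) :
  1 <= K -> 0 < e1 -> 0 < e2 -> e1 * (8 * K ^+ 2) < 1 -> e2 * (8 * K ^+ 2) < 1 ->
  (0 <= g2 -> K * g1 + g2 <= 0) -> (0 <= g1 -> g1 + K * g2 <= 0) ->
  `|P1| <= K * D2 -> `|P2| <= K * D1 ->
  0 <= e2 * (g1 + P1) - (1 - e2) * D1 -> 0 <= e1 * (g2 + P2) - (1 - e1) * D2 ->
  e2 * (g1 + P1) - (1 - e2) * D1 = 0 /\ e1 * (g2 + P2) - (1 - e1) * D2 = 0.
Proof.
move=> K1 e1p e2p e1s e2s T1 T2 HP1 HP2 H1 H2.
have K2 : 1 <= K ^+ 2 by rewrite expr2; nra.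
have e1s' : e1 * 8 < 1 by nra.
have e2s' : e2 * 8 < 1 by nra.
have e1K : e1 * K ^+ 2 * 8 < 1 by nra.
have e2K : e2 * K ^+ 2 * 8 < 1 by nra.
move: HP1 HP2; rewrite !ler_norml => /andP [HP1a HP1b] /andP [HP2a HP2b].
have K0 : 0 <= K by lra.
have e10 : 0 <= e1 by lra.
have e20 : 0 <= e2 by lra.
have Ke1e2 : 0 <= K * e1 * e2 by rewrite !mulr_ge0.
have e1e2 : 0 <= e1 * e2 by rewrite !mulr_ge0.
have D1p : 0 <= D1 by nra.
have D2p : 0 <= D2 by nra.
have HK2 : K ^+ 2 = K * K by rewrite expr2.
rewrite HK2 in e1K e2K.
have DD : D1 = 0 /\ D2 = 0.
  have [g2p|g2n] := lerP 0 g2.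
    have := T1 g2p => T.
    have S : 0 <= K * e1 * (e2 * (g1 + P1) - (1 - e2) * D1)
                 + e2 * (e1 * (g2 + P2) - (1 - e1) * D2).
      have : 0 <= K * e1 by nra.
      nra.
    have X1 : 0 <= K * e1 * D1 by nra.
    have X2 : 0 <= e2 * D2 by nra.
    have F1 : e1 * e2 * (K * g1 + g2) <= 0.
      by apply: mulr_ge0_le0 => //; lra.
    have F2 : K * e1 * e2 * P1 <= K * e1 * e2 * (K * D2).
      by apply: ler_wpM2l => //; lra.
    have F3 : e1 * e2 * P2 <= e1 * e2 * (K * D1).
      by apply: ler_wpM2l => //; lra.
    have F4 : K * e1 * D1 * (e2 * 4) <= K * e1 * D1.
      by rewrite -[X in _ <= X]mulr1; apply: ler_wpM2l => //; nra.
    have F5 : e2 * D2 * ((K * K * e1 + e1) * 2) <= e2 * D2.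
      by rewrite -[X in _ <= X]mulr1; apply: ler_wpM2l => //; nra.
    have : K * e1 * D1 + e2 * D2 <= 0 by nra.
    move=> Hs.
    have Y1 : K * e1 * D1 = 0 by lra.
    have Y2 : e2 * D2 = 0 by lra.
    split.
      move/eqP: Y1; rewrite !mulf_eq0 => /orP [/orP [/eqP Kz|/eqP e0]|/eqP //]; lra.
    by move/eqP: Y2; rewrite mulf_eq0 => /orP [/eqP e0|/eqP //]; lra.
  have [g1p|g1n] := lerP 0 g1.
    have := T2 g1p => T.
    have S : 0 <= e1 * (e2 * (g1 + P1) - (1 - e2) * D1)
                 + K * e2 * (e1 * (g2 + P2) - (1 - e1) * D2).
      have : 0 <= K * e2 by nra.
      nra.
    have X1 : 0 <= e1 * D1 by nra.
    have X2 : 0 <= K * e2 * D2 by nra.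
    have F1 : e1 * e2 * (g1 + K * g2) <= 0.
      by apply: mulr_ge0_le0 => //; lra.
    have F2 : K * e1 * e2 * P2 <= K * e1 * e2 * (K * D1).
      by apply: ler_wpM2l => //; lra.
    have F3 : e1 * e2 * P1 <= e1 * e2 * (K * D2).
      by apply: ler_wpM2l => //; lra.
    have F4 : K * e2 * D2 * (e1 * 4) <= K * e2 * D2.
      by rewrite -[X in _ <= X]mulr1; apply: ler_wpM2l => //; nra.
    have F5 : e1 * D1 * ((K * K * e2 + e2) * 2) <= e1 * D1.
      by rewrite -[X in _ <= X]mulr1; apply: ler_wpM2l => //; nra.
    have : e1 * D1 + K * e2 * D2 <= 0 by nra.
    move=> Hs.
    have Y1 : e1 * D1 = 0 by lra.
    have Y2 : K * e2 * D2 = 0 by lra.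
    split.
      by move/eqP: Y1; rewrite mulf_eq0 => /orP [/eqP e0|/eqP //]; lra.
    move/eqP: Y2; rewrite !mulf_eq0 => /orP [/orP [/eqP Kz|/eqP e0]|/eqP //]; lra.
  have A1 : (1 - e2) * D1 < e2 * K * D2 by nra.
  have A2 : (1 - e1) * D2 < e1 * K * D1 by nra.
  have : (1 - e2) * D1 * (1 - e1) <= e2 * K * D2 * (1 - e1) by nra.
  have : e2 * K * D2 * (1 - e1) <= e2 * K * (e1 * K * D1) by nra.
  nra.
case: DD => D10 D20.
rewrite D10 D20 in HP1a HP1b HP2a HP2b H1 H2 *.
have P10 : P1 = 0 by lra.
have P20 : P2 = 0 by lra.
rewrite P10 P20 in H1 H2 *.
have g1p : 0 <= g1 by nra.
have g2p : 0 <= g2 by nra.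
have := T1 g2p => T.
have g10 : g1 = 0 by nra.
have g20 : g2 = 0 by nra.
rewrite g10 g20; split; ring.
Qed.

End Core.

Section Main.
Variables (R : realFieldType) (A1 A2 : finType) (pi1 pi2 : A1 * A2 -> R) (a1 : A1) (a2 : A2).
Hypothesis Heff : pareto_efficient pi1 pi2 (dirac R a1, dirac R a2).
Hypothesis Hsn : strict_nash pi1 pi2 (a1, a2).

Definition h1 (x : A1 * A2) := pi1 x - pi1 (a1, a2).
Definition h2 (x : A1 * A2) := pi2 x - pi2 (a1, a2).

Lemma dirac_ge0 (A : finType) (a x : A) : 0 <= dirac R a x.
Proof. by rewrite ffunE; case: ifP. Qed.

Lemma dirac_mixed (A : finType) (a : A) : is_mixed (dirac R a).
Proof.
split; first exact: dirac_ge0.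
have := sum_dirac a (fun _ => 1 : R).
by under eq_bigr do rewrite mulr1.
Qed.

Lemma ext_pure (u : A1 * A2 -> R) x1 x2 :
  ext u (dirac R x1) (dirac R x2) = u (x1, x2).
Proof. by rewrite ext_dirac1 (sum_dirac x2 (fun y => u (x1, y))). Qed.

Lemma ext0l (u : A1 * A2 -> R) (s1 : {ffun A1 -> R}) s2 :
  (forall x, s1 x = 0) -> ext u s1 s2 = 0.
Proof.
move=> z; rewrite /ext big1 // => x1 _; apply: big1 => x2 _.
by rewrite z !mul0r.
Qed.

Lemma ext0r (u : A1 * A2 -> R) s1 (s2 : {ffun A2 -> R}) :
  (forall x, s2 x = 0) -> ext u s1 s2 = 0.
Proof.
move=> z; rewrite /ext big1 // => x1 _; apply: big1 => x2 _.
by rewrite z mulr0 mul0r.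
Qed.

Lemma ext_mixed1 s1 s2 : is_mixed s1 -> is_mixed s2 ->
  ext pi1 s1 s2 = ext h1 s1 s2 + pi1 (a1, a2).
Proof.
move=> [_ S1] [_ S2]; rewrite /h1 ext_subc S1 S2; ring.
Qed.

Lemma ext_mixed2 s1 s2 : is_mixed s1 -> is_mixed s2 ->
  ext pi2 s1 s2 = ext h2 s1 s2 + pi2 (a1, a2).
Proof.
move=> [_ S1] [_ S2]; rewrite /h2 ext_subc S1 S2; ring.
Qed.

Lemma normalize (A : finType) (s : {ffun A -> R}) :
  (forall x, 0 <= s x) -> \sum_x s x != 0 ->
  is_mixed [ffun x => (\sum_y s y)^-1 * s x].
Proof.
move=> s0 Sn; split.
  move=> x; rewrite ffunE mulr_ge0 // invr_ge0; exact: sumr_ge0.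
under eq_bigr do rewrite ffunE.
by rewrite -mulr_sumr mulVf.
Qed.

Lemma Eff_gen (s1 : {ffun A1 -> R}) (s2 : {ffun A2 -> R}) :
  (forall x, 0 <= s1 x) -> (forall x, 0 <= s2 x) ->
  0 <= ext h1 s1 s2 -> 0 <= ext h2 s1 s2 ->
  ext h1 s1 s2 = 0 /\ ext h2 s1 s2 = 0.
Proof.
move=> s10 s20 H1 H2.
have [S10|S1n] := eqVneq (\sum_x s1 x) 0.
  have z := psumr_eq0P (fun i _ => s10 i) S10.
  by rewrite !ext0l // => x; apply: z.
have [S20|S2n] := eqVneq (\sum_x s2 x) 0.
  have z := psumr_eq0P (fun i _ => s20 i) S20.
  by rewrite !ext0r // => x; apply: z.
set c1 := (\sum_x s1 x)^-1; set c2 := (\sum_x s2 x)^-1.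
have m1 := normalize s10 S1n; have m2 := normalize s20 S2n.
rewrite -/c1 in m1; rewrite -/c2 in m2.
have c1p : 0 < c1 by rewrite invr_gt0 lt_def S1n sumr_ge0.
have c2p : 0 < c2 by rewrite invr_gt0 lt_def S2n sumr_ge0.
have cp : 0 < c1 * c2 by rewrite mulr_gt0.
have Y1 := ext_scale h1 c1 c2 s1 s2.
have Y2 := ext_scale h2 c1 c2 s1 s2.
have Hnd : ~ (0 < ext h1 s1 s2 \/ 0 < ext h2 s1 s2).
  move=> Hor; apply: Heff.
  exists ([ffun x => c1 * s1 x], [ffun x => c2 * s2 x]); split => //; split => //.
  rewrite /pareto_dominates /= !ext_pure (ext_mixed1 m1 m2) (ext_mixed2 m1 m2) Y1 Y2.
  have P1 : 0 <= c1 * c2 * ext h1 s1 s2 by rewrite mulr_ge0 // ltW.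
  have P2 : 0 <= c1 * c2 * ext h2 s1 s2 by rewrite mulr_ge0 // ltW.
  split; first lra. split; first lra.
  case: Hor => H; [left | right].
    have : 0 < c1 * c2 * ext h1 s1 s2 by rewrite mulr_gt0.
    lra.
  have : 0 < c1 * c2 * ext h2 s1 s2 by rewrite mulr_gt0.
  lra.
split.
  apply/eqP; rewrite eq_le H1 andbT leNgt; apply/negP => H; apply: Hnd; by left.
apply/eqP; rewrite eq_le H2 andbT leNgt; apply/negP => H; apply: Hnd; by right.
Qed.

Lemma Eff12 (s1 : {ffun A1 -> R}) (s2 : {ffun A2 -> R}) :
  (forall x, 0 <= s1 x) -> (forall x, 0 <= s2 x) ->
  0 <= ext h2 s1 s2 -> ext h1 s1 s2 <= 0.
Proof.
move=> s10 s20 H2; rewrite leNgt; apply/negP => H.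
have [E _] := Eff_gen s10 s20 (ltW H) H2.
by move: H; rewrite E ltxx.
Qed.

Lemma Eff21 (s1 : {ffun A1 -> R}) (s2 : {ffun A2 -> R}) :
  (forall x, 0 <= s1 x) -> (forall x, 0 <= s2 x) ->
  0 <= ext h1 s1 s2 -> ext h2 s1 s2 <= 0.
Proof.
move=> s10 s20 H1; rewrite leNgt; apply/negP => H.
have [_ E] := Eff_gen s10 s20 H1 (ltW H).
by move: H; rewrite E ltxx.
Qed.

Lemma tradeoff (u1 u2 : A1 * A2 -> R) K : 0 <= K ->
  (forall (s1 : {ffun A1 -> R}) (s2 : {ffun A2 -> R}),
     (forall x, 0 <= s1 x) -> (forall x, 0 <= s2 x) ->
     0 <= ext u2 s1 s2 -> ext u1 s1 s2 <= 0) ->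
  (forall x, 0 <= u2 x -> K * u1 x + u2 x <= 0) ->
  forall (s1 : {ffun A1 -> R}) (s2 : {ffun A2 -> R}),
     (forall x, 0 <= s1 x) -> (forall x, 0 <= s2 x) ->
     0 <= ext u2 s1 s2 -> K * ext u1 s1 s2 + ext u2 s1 s2 <= 0.
Proof.
move=> K0 E Hp.
have St1 : forall x1 (w : {ffun A2 -> R}), (forall x, 0 <= w x) ->
    0 <= ext u2 (dirac R x1) w ->
    K * ext u1 (dirac R x1) w + ext u2 (dirac R x1) w <= 0.
  move=> x1 w w0; rewrite !ext_dirac1.
  apply: (@cone2 R A2 (fun x2 => u1 (x1, x2)) (fun x2 => u2 (x1, x2))) => //.
  - move=> mu mu0 Hm.
    have := E (dirac R x1) [ffun x => mu x] (dirac_ge0 x1).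
    rewrite !ext_dirac1.
    have Hf : forall u : A1 * A2 -> R, \sum_x2 [ffun x => mu x] x2 * u (x1, x2)
                 = \sum_x2 mu x2 * u (x1, x2).
      by move=> u; apply: eq_bigr => x _; rewrite ffunE.
    rewrite !Hf; apply => //; by move=> x; rewrite ffunE.
  - move=> x2 Hx; exact: Hp.
move=> s1 s2 s10 s20; rewrite (ext_lin1 u1) (ext_lin1 u2).
apply: (@cone2 R A1 (fun x1 => ext u1 (dirac R x1) s2)
                  (fun x1 => ext u2 (dirac R x1) s2)) => //.
- move=> mu mu0 Hm.
  have := E [ffun x => mu x] s2; rewrite (ext_lin1 u1) (ext_lin1 u2).
  have Hf : forall u : A1 * A2 -> R,
      \sum_x1 [ffun x => mu x] x1 * ext u (dirac R x1) s2
      = \sum_x1 mu x1 * ext u (dirac R x1) s2.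
    by move=> u; apply: eq_bigr => x _; rewrite ffunE.
  rewrite !Hf; apply => //; by move=> x; rewrite ffunE.
- move=> x1 Hx; exact: St1.
Qed.

Definition rt (u v : A1 * A2 -> R) (x : A1 * A2) : R :=
  if u x == 0 then 0 else `|v x| / `|u x|.

Definition KK := 1 + \sum_x rt h1 h2 x + \sum_x rt h2 h1 x.

Lemma rt_ge0 u v x : 0 <= rt u v x.
Proof. by rewrite /rt; case: ifP => // _; rewrite divr_ge0. Qed.

Lemma rt_le_sum u v x : rt u v x <= \sum_y rt u v y.
Proof.
rewrite (bigD1 x) //= lerDl; apply: sumr_ge0 => y _; exact: rt_ge0.
Qed.

Lemma KK_ge1 : 1 <= KK.
Proof.
rewrite /KK -addrA lerDl addr_ge0 //; apply: sumr_ge0 => y _; exact: rt_ge0.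
Qed.

Lemma Kb12 x : h1 x != 0 -> `|h2 x| <= KK * `|h1 x|.
Proof.
move=> nz.
have : rt h1 h2 x <= KK.
  apply: (le_trans (rt_le_sum h1 h2 x)).
  rewrite /KK -addrA addrCA lerDl addr_ge0 //; apply: sumr_ge0 => y _; exact: rt_ge0.
rewrite /rt (negbTE nz) ler_pdivrMr //; by rewrite normr_gt0.
Qed.

Lemma Kb21 x : h2 x != 0 -> `|h1 x| <= KK * `|h2 x|.
Proof.
move=> nz.
have : rt h2 h1 x <= KK.
  apply: (le_trans (rt_le_sum h2 h1 x)).
  rewrite /KK lerDr addr_ge0 //; apply: sumr_ge0 => y _; exact: rt_ge0.
rewrite /rt (negbTE nz) ler_pdivrMr //; by rewrite normr_gt0.
Qed.

Lemma pure12 x : 0 <= h2 x -> KK * h1 x + h2 x <= 0.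
Proof.
case: x => x1 x2 H.
have E1 : h1 (x1, x2) <= 0.
  have := @Eff12 (dirac R x1) (dirac R x2) (dirac_ge0 x1) (dirac_ge0 x2).
  by rewrite !ext_pure; apply.
have [z|nz] := eqVneq (h1 (x1, x2)) 0.
  have : h2 (x1, x2) <= 0.
    have := @Eff21 (dirac R x1) (dirac R x2) (dirac_ge0 x1) (dirac_ge0 x2).
    by rewrite !ext_pure z; apply.
  rewrite z; lra.
have := Kb12 nz.
have h1n : h1 (x1, x2) < 0 by rewrite lt_neqAle nz E1.
rewrite (ger0_norm H) (ltr0_norm h1n); lra.
Qed.

Lemma pure21 x : 0 <= h1 x -> KK * h2 x + h1 x <= 0.
Proof.
case: x => x1 x2 H.
have E1 : h2 (x1, x2) <= 0.
  have := @Eff21 (dirac R x1) (dirac R x2) (dirac_ge0 x1) (dirac_ge0 x2).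
  by rewrite !ext_pure; apply.
have [z|nz] := eqVneq (h2 (x1, x2)) 0.
  have : h1 (x1, x2) <= 0.
    have := @Eff12 (dirac R x1) (dirac R x2) (dirac_ge0 x1) (dirac_ge0 x2).
    by rewrite !ext_pure z; apply.
  rewrite z; lra.
have := Kb21 nz.
have h1n : h2 (x1, x2) < 0 by rewrite lt_neqAle nz E1.
rewrite (ger0_norm H) (ltr0_norm h1n); lra.
Qed.

Lemma T1 (s1 : {ffun A1 -> R}) (s2 : {ffun A2 -> R}) :
  (forall x, 0 <= s1 x) -> (forall x, 0 <= s2 x) ->
  0 <= ext h2 s1 s2 -> KK * ext h1 s1 s2 + ext h2 s1 s2 <= 0.
Proof.
apply: tradeoff => //; [| exact: Eff12 | exact: pure12].
by have := KK_ge1; lra.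
Qed.

Lemma T2 (s1 : {ffun A1 -> R}) (s2 : {ffun A2 -> R}) :
  (forall x, 0 <= s1 x) -> (forall x, 0 <= s2 x) ->
  0 <= ext h1 s1 s2 -> ext h1 s1 s2 + KK * ext h2 s1 s2 <= 0.
Proof.
move=> s10 s20 H; rewrite addrC.
apply: tradeoff => //; [| exact: Eff21 | exact: pure21].
by have := KK_ge1; lra.
Qed.

Lemma T3 (t : {ffun A2 -> R}) : (forall x, 0 <= t x) ->
  `|ext h1 (dirac R a1) t| <= - (KK * ext h2 (dirac R a1) t).
Proof.
move=> t0.
have P : forall x2, `|h1 (a1, x2)| <= - (KK * h2 (a1, x2)).
  move=> x2; have [->|ne] := eqVneq x2 a2.
    by rewrite /h1 /h2 !subrr normr0 mulr0 oppr0.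
  case: Hsn => _ /(_ x2 ne) /= Hl.
  have h2n : h2 (a1, x2) < 0 by rewrite /h2 subr_lt0.
  have := Kb21 (negbT (lt_eqF h2n)); rewrite (ltr0_norm h2n); lra.
rewrite !ext_dirac1 mulr_sumr -sumrN.
apply: (le_trans (ler_norm_sum _ _ _)); apply: ler_sum => x2 _.
rewrite normrM (ger0_norm (t0 x2)).
have -> : - (KK * (t x2 * h2 (a1, x2))) = t x2 * - (KK * h2 (a1, x2)) by ring.
by apply: ler_wpM2l.
Qed.

Lemma T4 (t : {ffun A1 -> R}) : (forall x, 0 <= t x) ->
  `|ext h2 t (dirac R a2)| <= - (KK * ext h1 t (dirac R a2)).
Proof.
move=> t0.
have P : forall x1, `|h2 (x1, a2)| <= - (KK * h1 (x1, a2)).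
  move=> x1; have [->|ne] := eqVneq x1 a1.
    by rewrite /h1 /h2 !subrr normr0 mulr0 oppr0.
  case: Hsn => /(_ x1 ne) /= Hl _.
  have h1n : h1 (x1, a2) < 0 by rewrite /h1 subr_lt0.
  have := Kb12 (negbT (lt_eqF h1n)); rewrite (ltr0_norm h1n); lra.
rewrite !ext_dirac2 mulr_sumr -sumrN.
apply: (le_trans (ler_norm_sum _ _ _)); apply: ler_sum => x1 _.
rewrite normrM (ger0_norm (t0 x1)).
have -> : - (KK * (t x1 * h1 (x1, a2))) = t x1 * - (KK * h1 (x1, a2)) by ring.
by apply: ler_wpM2l.
Qed.

Definition th1 : Theta R A1 A2 := [ffun x => if x.1 == a1 then 1 else 0].
Definition th2 : Theta R A1 A2 := [ffun x => if x.2 == a2 then 1 else 0].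

Lemma th1E x1 x2 : th1 (x1, x2) = dirac R a1 x1. Proof. by rewrite !ffunE. Qed.
Lemma th2E x1 x2 : th2 (x1, x2) = dirac R a2 x2. Proof. by rewrite !ffunE. Qed.

Lemma mixed_le (A : finType) (s : {ffun A -> R}) a : is_mixed s -> s a <= 1.
Proof. move=> [s0 S]; rewrite -S (bigD1 a) //= lerDl; exact: sumr_ge0. Qed.

Lemma mixed_dirac (A : finType) (s : {ffun A -> R}) a :
  is_mixed s -> 1 <= s a -> s = dirac R a.
Proof.
move=> [s0 S] H; apply/ffunP => x; rewrite ffunE.
have Hle := mixed_le a (conj s0 S).
have [->|ne] := eqVneq x a; first by apply/eqP; rewrite eq_le Hle H.
have : s a + \sum_(y | y != a) s y = 1 by rewrite -S [in RHS](bigD1 a).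
have : s x <= \sum_(y | y != a) s y.
  rewrite (bigD1 x ne) /= lerDl; apply: sumr_ge0 => y _; exact: s0.
have := s0 x; lra.
Qed.

Lemma ext_th2 (s1 : {ffun A1 -> R}) (s2 : {ffun A2 -> R}) :
  ext th2 s1 s2 = (\sum_x s1 x) * s2 a2.
Proof.
rewrite ext_lin1 mulr_suml; apply: eq_bigr => x1 _; rewrite ext_dirac1; congr (_ * _).
rewrite -(sum_dirac a2 s2); apply: eq_bigr => x2 _; by rewrite th2E mulrC.
Qed.

Lemma ext_th1 (s1 : {ffun A1 -> R}) (s2 : {ffun A2 -> R}) :
  ext th1 s1 s2 = s1 a1 * (\sum_x s2 x).
Proof.
rewrite ext_lin1 -(sum_dirac a1 s1) mulr_suml; apply: eq_bigr => x1 _.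
rewrite ext_dirac1.
under eq_bigr do rewrite th1E.
rewrite -mulr_suml; ring.
Qed.

Lemma dom2 (u : A1 * A2 -> R) (s : profile R A1 A2) : nash u th2 s -> s.2 = dirac R a2.
Proof.
move=> [m1 [m2 [_ H2]]]; apply: mixed_dirac m2 _.
have := H2 _ (dirac_mixed a2); rewrite !ext_th2; case: m1 => _ ->.
by rewrite !mul1r ffunE eqxx.
Qed.

Lemma dom1 (u : A1 * A2 -> R) (s : profile R A1 A2) : nash th1 u s -> s.1 = dirac R a1.
Proof.
move=> [m1 [m2 [H1 _]]]; apply: mixed_dirac m1 _.
have := H1 _ (dirac_mixed a1); rewrite !ext_th1; case: m2 => _ ->.
by rewrite !mulr1 ffunE eqxx.
Qed.

Lemma nash_inc : nash th1 th2 (dirac R a1, dirac R a2).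
Proof.
have [_ S1] := dirac_mixed a1; have [_ S2] := dirac_mixed a2.
split; first exact: dirac_mixed. split; first exact: dirac_mixed.
split => /= t Ht.
  by rewrite !ext_th1 S2 !mulr1 ffunE eqxx; apply: mixed_le.
by rewrite !ext_th2 S1 !mul1r ffunE eqxx; apply: mixed_le.
Qed.

Definition d1 : dist R A1 A2 := Dist [:: th1] (fun _ => 1).
Definition d2 : dist R A1 A2 := Dist [:: th2] (fun _ => 1).
Definition b0 : strat R A1 A2 := fun _ _ => (dirac R a1, dirac R a2).

Lemma fit1_d2 f1 bt t : fit1 pi1 f1 d2 bt t = ext pi1 (bt t th2).1 (bt t th2).2.
Proof. by rewrite /fit1 /= big_seq1 mul1r. Qed.

Lemma fit1_e2 f1 bt t t2m e : th2 != t2m ->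
  fit1 pi1 f1 (entry t2m e d2) bt t =
  e * ext pi1 (bt t t2m).1 (bt t t2m).2 + (1 - e) * ext pi1 (bt t th2).1 (bt t th2).2.
Proof. by move=> ne; rewrite /fit1 /= big_cons big_seq1 eqxx (negbTE ne) mulr1. Qed.

Lemma fit2_d1 f2 bt t : fit2 pi2 d1 f2 bt t = ext pi2 (bt th1 t).1 (bt th1 t).2.
Proof. by rewrite /fit2 /= big_seq1 mul1r. Qed.

Lemma fit2_e1 f2 bt t t1m e : th1 != t1m ->
  fit2 pi2 (entry t1m e d1) f2 bt t =
  e * ext pi2 (bt t1m t).1 (bt t1m t).2 + (1 - e) * ext pi2 (bt th1 t).1 (bt th1 t).2.
Proof. by move=> ne; rewrite /fit2 /= big_cons big_seq1 eqxx (negbTE ne) mulr1. Qed.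

Lemma mixed_ge0 (A : finType) (s : {ffun A -> R}) : is_mixed s -> forall x, 0 <= s x.
Proof. by case. Qed.

Lemma eb_lt e : 0 < e < (8 * KK ^+ 2)^-1 -> 0 < e /\ e * (8 * KK ^+ 2) < 1.
Proof.
have K1 := KK_ge1.
have Kp : 0 < 8 * KK ^+ 2 by rewrite mulr_gt0 // exprn_gt0 //; lra.
move=> /andP [e0 el]; split => //.
by move: el; rewrite -[X in _ < X]mul1r ltr_pdivlMr.
Qed.

Lemma stable_main : stable pi1 pi2 d1 d2 b0.
Proof.
split.
  by split=> t t'; rewrite !mem_seq1 => /eqP -> /eqP ->.
move=> m1 m2 Hnn Hm1 Hm2.
have K1 := KK_ge1.
exists (8 * KK ^+ 2)^-1.
have Kp : 0 < 8 * KK ^+ 2 by rewrite mulr_gt0 // exprn_gt0 //; lra.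
split.
  rewrite invr_gt0 Kp /= invf_lt1 //.
  have : 1 <= KK ^+ 2 by rewrite expr2; nra.
  lra.
move=> e1 e2 He1 He2 /= bt [Heq Hbt].
have Hinc : bt th1 th2 = (dirac R a1, dirac R a2).
  by rewrite Hbt //= mem_seq1.
have c1E : ext pi1 (bt th1 th2).1 (bt th1 th2).2 = pi1 (a1, a2) by rewrite Hinc ext_pure.
have c2E : ext pi2 (bt th1 th2).1 (bt th1 th2).2 = pi2 (a1, a2) by rewrite Hinc ext_pure.
case: m1 Hnn Hm1 He1 Heq => [t1m|] Hnn Hm1 He1 Heq;
  case: m2 Hnn Hm2 He2 Heq => [t2m|] Hnn Hm2 He2 Heq.
-
  have ne1 : t1m != th1 by have := Hm1 t1m erefl; rewrite mem_seq1.
  have ne2 : t2m != th2 by have := Hm2 t2m erefl; rewrite mem_seq1.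
  have [e1p e1s] := eb_lt (He1 (fun H => ltac:(discriminate))).
  have [e2p e2s] := eb_lt (He2 (fun H => ltac:(discriminate))).
  have Hs : nash t1m th2 (bt t1m th2) by apply: Heq; rewrite /= !inE eqxx ?orbT.
  have Hr : nash th1 t2m (bt th1 t2m) by apply: Heq; rewrite /= !inE eqxx ?orbT.
  have Hp : nash t1m t2m (bt t1m t2m) by apply: Heq; rewrite /= !inE eqxx ?orbT.
  have s2E := dom2 Hs.
  have r1E := dom1 Hr.
  have [ms1 [ms2 _]] := Hs.
  have [mr1 [mr2 _]] := Hr.
  have [mp1 [mp2 _]] := Hp.
  set X1 := ext h1 (bt t1m th2).1 (dirac R a2).
  set X2 := ext h2 (bt t1m th2).1 (dirac R a2).
  set Z1 := ext h1 (dirac R a1) (bt th1 t2m).2.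
  set Z2 := ext h2 (dirac R a1) (bt th1 t2m).2.
  set g1 := ext h1 (bt t1m t2m).1 (bt t1m t2m).2.
  set g2 := ext h2 (bt t1m t2m).1 (bt t1m t2m).2.
  have Es1 : ext pi1 (bt t1m th2).1 (bt t1m th2).2 = X1 + pi1 (a1, a2).
    by rewrite s2E (ext_mixed1 ms1 (dirac_mixed a2)).
  have Es2 : ext pi2 (bt t1m th2).1 (bt t1m th2).2 = X2 + pi2 (a1, a2).
    by rewrite s2E (ext_mixed2 ms1 (dirac_mixed a2)).
  have Er1 : ext pi1 (bt th1 t2m).1 (bt th1 t2m).2 = Z1 + pi1 (a1, a2).
    by rewrite r1E (ext_mixed1 (dirac_mixed a1) mr2).
  have Er2 : ext pi2 (bt th1 t2m).1 (bt th1 t2m).2 = Z2 + pi2 (a1, a2).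
    by rewrite r1E (ext_mixed2 (dirac_mixed a1) mr2).
  have Ep1 : ext pi1 (bt t1m t2m).1 (bt t1m t2m).2 = g1 + pi1 (a1, a2).
    by rewrite (ext_mixed1 mp1 mp2).
  have Ep2 : ext pi2 (bt t1m t2m).1 (bt t1m t2m).2 = g2 + pi2 (a1, a2).
    by rewrite (ext_mixed2 mp1 mp2).
  have ne2' : th2 != t2m by rewrite eq_sym.
  have ne1' : th1 != t1m by rewrite eq_sym.
  set f1 := entry t1m e1 d1.
  set f2 := entry t2m e2 d2.
  have F1m : fit1 pi1 f1 f2 bt t1m = e2 * (g1 + pi1 (a1, a2)) + (1 - e2) * (X1 + pi1 (a1, a2)).
    by rewrite fit1_e2 // Ep1 Es1.
  have F1i : fit1 pi1 f1 f2 bt th1 = e2 * (Z1 + pi1 (a1, a2)) + (1 - e2) * pi1 (a1, a2).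
    by rewrite fit1_e2 // Er1 c1E.
  have F2m : fit2 pi2 f1 f2 bt t2m = e1 * (g2 + pi2 (a1, a2)) + (1 - e1) * (Z2 + pi2 (a1, a2)).
    by rewrite fit2_e1 // Ep2 Er2.
  have F2i : fit2 pi2 f1 f2 bt th2 = e1 * (X2 + pi2 (a1, a2)) + (1 - e1) * pi2 (a1, a2).
    by rewrite fit2_e1 // Es2 c2E.
  have HT3 := T3 (mixed_ge0 mr2); rewrite -/Z1 -/Z2 in HT3.
  have HT4 := T4 (mixed_ge0 ms1); rewrite -/X1 -/X2 in HT4.
  have HT1 : 0 <= g2 -> KK * g1 + g2 <= 0 by apply: T1; apply: mixed_ge0.
  have HT2 : 0 <= g1 -> g1 + KK * g2 <= 0 by apply: T2; apply: mixed_ge0.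
  have HC := @core R KK e1 e2 g1 g2 (- Z1) (- X2) (- X1) (- Z2) K1 e1p e2p e1s e2s HT1 HT2.
  rewrite !normrN in HC.
  have HP1 : `|Z1| <= KK * - Z2 by rewrite mulrN.
  have HP2 : `|X2| <= KK * - X1 by rewrite mulrN.
  have {}HC := HC HP1 HP2.
  have [D1n|D1p] := ltP (e2 * (g1 + - Z1) - (1 - e2) * - X1) 0.
    left; left; exists t1m; split => // t; rewrite mem_seq1 => /eqP ->.
    rewrite F1m F1i; lra.
  have [D2n|D2p] := ltP (e1 * (g2 + - X2) - (1 - e1) * - Z2) 0.
    left; right; exists t2m; split => // t; rewrite mem_seq1 => /eqP ->.
    rewrite F2m F2i; lra.
  have [C1 C2] := HC D1p D2p.
  right; split.
    move=> t t'; rewrite /= !inE => /orP [/eqP ->|/eqP ->] /orP [/eqP ->|/eqP ->];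
      rewrite ?F1m ?F1i; lra.
  move=> t t'; rewrite /= !inE => /orP [/eqP ->|/eqP ->] /orP [/eqP ->|/eqP ->];
    rewrite ?F2m ?F2i; lra.
-
  have ne1 : t1m != th1 by have := Hm1 t1m erefl; rewrite mem_seq1.
  have Hs : nash t1m th2 (bt t1m th2) by apply: Heq; rewrite /= !inE eqxx ?orbT.
  have s2E := dom2 Hs.
  have [ms1 [ms2 _]] := Hs.
  set X1 := ext h1 (bt t1m th2).1 (dirac R a2).
  set X2 := ext h2 (bt t1m th2).1 (dirac R a2).
  have Fm : fit1 pi1 (entry t1m e1 d1) d2 bt t1m = X1 + pi1 (a1, a2).
    by rewrite fit1_d2 s2E (ext_mixed1 ms1 (dirac_mixed a2)).
  have Fi : fit1 pi1 (entry t1m e1 d1) d2 bt th1 = pi1 (a1, a2) by rewrite fit1_d2.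
  have HT := T4 (mixed_ge0 ms1); rewrite -/X1 -/X2 in HT.
  have X1le : X1 <= 0 by have := normr_ge0 X2; nra.
  have [X1n|X1z] := ltP X1 0.
    left; left; exists t1m; split => // t; rewrite mem_seq1 => /eqP ->.
    rewrite Fm Fi; lra.
  right; split.
    move=> t t'; rewrite /= !inE => /orP [/eqP ->|/eqP ->] /orP [/eqP ->|/eqP ->];
      rewrite ?Fm ?Fi; lra.
  by move=> t t'; rewrite /= !mem_seq1 => /eqP -> /eqP ->.
-
  have ne2 : t2m != th2 by have := Hm2 t2m erefl; rewrite mem_seq1.
  have Hs : nash th1 t2m (bt th1 t2m) by apply: Heq; rewrite /= !inE eqxx ?orbT.
  have s1E := dom1 Hs.
  have [ms1 [ms2 _]] := Hs.
  set Z1 := ext h1 (dirac R a1) (bt th1 t2m).2.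
  set Z2 := ext h2 (dirac R a1) (bt th1 t2m).2.
  have Fm : fit2 pi2 d1 (entry t2m e2 d2) bt t2m = Z2 + pi2 (a1, a2).
    by rewrite fit2_d1 s1E (ext_mixed2 (dirac_mixed a1) ms2).
  have Fi : fit2 pi2 d1 (entry t2m e2 d2) bt th2 = pi2 (a1, a2) by rewrite fit2_d1.
  have HT := T3 (mixed_ge0 ms2); rewrite -/Z1 -/Z2 in HT.
  have Z2le : Z2 <= 0 by have := normr_ge0 Z1; nra.
  have [Z2n|Z2z] := ltP Z2 0.
    left; right; exists t2m; split => // t; rewrite mem_seq1 => /eqP ->.
    rewrite Fm Fi; lra.
  right; split.
    by move=> t t'; rewrite /= !mem_seq1 => /eqP -> /eqP ->.
  move=> t t'; rewrite /= !inE => /orP [/eqP ->|/eqP ->] /orP [/eqP ->|/eqP ->];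
    rewrite ?Fm ?Fi; lra.
- by case: Hnn.
Qed.

Lemma main_sec : stable_profile pi1 pi2 (dirac R a1, dirac R a2).
Proof.
exists d1, d2, b0.
split.
  split => //=; split; first by move=> t _; exact: ltr01.
  by rewrite big_seq1.
split.
  split => //=; split; first by move=> t _; exact: ltr01.
  by rewrite big_seq1.
split.
  by move=> t1 t2; rewrite !mem_seq1 => /eqP -> /eqP ->; exact: nash_inc.
split; first exact: stable_main.
by move=> [x1 x2]; rewrite /aggregate /= !big_seq1 !mul1r.
Qed.

End Main.

Theorem mainTheorem4 (R : realFieldType) (A1 A2 : finType)
    (pi1 pi2 : A1 * A2 -> R) (a1 : A1) (a2 : A2) :
  pareto_efficient pi1 pi2 (dirac R a1, dirac R a2) ->
  strict_nash pi1 pi2 (a1, a2) ->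
  stable_profile pi1 pi2 (dirac R a1, dirac R a2).
Proof. by move=> He Hs; apply: main_sec. Qed.
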